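(* Let $c(u),p(u),s(u)$ be arbitrary smooth functions. For every smooth function $f(u)$ define $H_f=\int h_f\,dx$ with $$h_f=f-\frac{\epsilon^2}{24}c\,f'''u_x^2+\epsilon^4\Big[\Big(p\,f'''+\frac{c^2f^{(4)}}{480}\Big)u_{xx}^2-\Big(\frac{c\,c''f^{(4)}}{1152}+\frac{c\,c'f^{(5)}}{1152}+\frac{c^2f^{(6)}}{3456}+\frac{p'f^{(4)}}{6}+\frac{p\,f^{(5)}}{6}-s\,f'''\Big)u_x^4\Big],$$ where $c=c(u)$, $p=p(u)$, $s=s(u)$, $f=f(u)$ and primes denote $d/du$. Then for any two smooth functions $f,g$, $$\{H_f,H_g\}=O(\epsilon^6),$$ i.e. $\mathcal E\big(\frac{\delta H_f}{\delta u(x)}\partial_x\frac{\delta H_g}{\delta u(x)}\big)=O(\epsilon^6)$. In particular, since $H_{u^3/6}=\int[\frac{u^3}{6}-\epsilon^2\frac{c}{24}u_x^2+\epsilon^4(p\,u_{xx}^2+s\,u_x^4)]dx$, every flow $u_s+\partial_x\frac{\delta H_f}{\delta u(x)}=0$ is, modulo $O(\epsilon^6)$, a symmetry of $u_t+\partial_x\frac{\delta H_{u^3/6}}{\delta u(x)}=0$. *)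

(* Defs.v *)
(* Formal variational calculus for one dependent variable u(x):
   - a "jet" j : nat -> R lists the values (u, u_x, u_xx, ...) = (j 0, j 1, j 2, ...);
   - a differential function is a map jet -> R (depending on finitely many jet entries);
   - quantities depending on the dispersive parameter epsilon are handled as formal
     power series in epsilon: a series h : nat -> (jet -> R), h n = coefficient of eps^n. *)
From Stdlib Require Import Reals.
From Coquelicot Require Import Coquelicot.
Open Scope R_scope.

Definition jet := nat -> R.

Definition smooth (f : R -> R) : Prop := forall (n : nat) (x : R), ex_derive_n f n x.

Definition dn (f : R -> R) (k : nat) : R -> R := Derive_n f k.

Definition upd (j : jet) (k : nat) (t : R) : jet :=
  fun i => if Nat.eqb i k then t else j i.

Definition pder (k : nat) (F : jet -> R) : jet -> R :=
  fun j => Derive (fun t => F (upd j k t)) (j k).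

(* total x-derivative: derivative of F along the shift vector (u_1, u_2, ...),
   i.e. D_x F = sum_k u_{k+1} dF/du_k for (C^1) differential functions *)
Definition Dx (F : jet -> R) : jet -> R :=
  fun j => Derive (fun t => F (fun i => j i + t * j (S i))) 0.

Fixpoint Dxn (k : nat) (F : jet -> R) : jet -> R :=
  match k with O => F | S k' => Dx (Dxn k' F) end.

(* Euler operator (variational derivative) for differential functions of order <= m:
   E_m F = sum_{k=0}^m (-D_x)^k (dF/du_k) *)
Fixpoint euler_aux (m : nat) (F : jet -> R) : jet -> R :=
  match m with
  | O => pder 0 F
  | S m' => fun j => euler_aux m' F j + (-1) ^ m * Dxn m (pder m F) j
  end.
Definition euler (m : nat) (F : jet -> R) : jet -> R := euler_aux m F.

Definition ser := nat -> jet -> R.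

Definition sDx (h : ser) : ser := fun n => Dx (h n).
Definition svar (m : nat) (h : ser) : ser := fun n => euler m (h n).
Definition smul (a b : ser) : ser :=
  fun n j => sum_f_R0 (fun i => a i j * b (n - i)%nat j) n.

Definition hdens (c p s f : R -> R) : ser :=
  fun n j =>
    let u := j 0%nat in
    let ux := j 1%nat in
    let uxx := j 2%nat in
    match n with
    | 0%nat => f u
    | 2%nat => - (1/24) * c u * dn f 3 u * ux ^ 2
    | 4%nat =>
        (p u * dn f 3 u + (c u) ^ 2 * dn f 4 u / 480) * uxx ^ 2
        - ( c u * dn c 2 u * dn f 4 u / 1152
          + c u * dn c 1 u * dn f 5 u / 1152
          + (c u) ^ 2 * dn f 6 u / 3456
          + dn p 1 u * dn f 4 u / 6
          + p u * dn f 5 u / 6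
          - s u * dn f 3 u ) * ux ^ 4
    | _ => 0
    end.

(* density of the Poisson bracket {H_f, H_g}:
   (delta H_f / delta u) * d/dx (delta H_g / delta u); h_f, h_g have order 2,
   and the resulting density has order 5. *)
Definition bracket_dens (c p s f g : R -> R) : ser :=
  smul (svar 2 (hdens c p s f)) (sDx (svar 2 (hdens c p s g))).

(* Main.v *)
Require Import Defs.
From Stdlib Require Import Reals.
From Coquelicot Require Import Coquelicot.
From Stdlib Require Import QArith Qreals List FunctionalExtensionality Lra.
Import ListNotations.
Open Scope R_scope.
Local Open Scope Q_scope.

Inductive atom := AV (k:nat) | AF (i d : nat).
Definition atom_leb (a b : atom) : bool :=
  match a, b with
  | AV k, AV k' => Nat.leb k k'
  | AV _, AF _ _ => true
  | AF _ _, AV _ => false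
  | AF i d, AF i' d' => Nat.ltb i i' || (Nat.eqb i i' && Nat.leb d d')
  end.
Definition atom_eqb (a b : atom) : bool :=
  match a, b with
  | AV k, AV k' => Nat.eqb k k'
  | AF i d, AF i' d' => Nat.eqb i i' && Nat.eqb d d'
  | _, _ => false
  end.
Definition mono := list atom.
Definition poly := list (Q * mono).
Fixpoint ins_atom (a:atom) (m:mono) : mono :=
  match m with nil => [a] | b::m' => if atom_leb a b then a::m else b :: ins_atom a m' end.
Definition mmul (m1 m2:mono) : mono := fold_right ins_atom m2 m1.
Fixpoint mono_eqb (m1 m2 : mono) : bool :=
  match m1, m2 with
  | nil, nil => true
  | a::m1', b::m2' => atom_eqb a b && mono_eqb m1' m2'
  | _, _ => false end.
Fixpoint ins_term (c:Q) (m:mono) (P:poly) : poly :=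
  match P with
  | nil => if Qeq_bool c 0%Q then nil else [(c,m)]
  | (c',m')::P' => if mono_eqb m m' then
        (let s := Qred (c+c')%Q in if Qeq_bool s 0%Q then P' else (s,m')::P')
      else (c',m') :: ins_term c m P'
  end.
Definition padd (P Q0 : poly) : poly := fold_right (fun t acc => ins_term (fst t) (snd t) acc) Q0 P.
Definition pscale (q:Q) (P:poly) : poly := map (fun t => (Qred (q * fst t)%Q, snd t)) P.
Definition pmul (P Q0 : poly) : poly :=
  fold_right (fun t acc => padd (map (fun t' => (Qred (fst t * fst t')%Q, mmul (snd t) (snd t'))) Q0) acc) nil P.
Fixpoint dmono (d : atom -> poly) (m : mono) : poly :=
  match m with nil => nil | a::m' => padd (pmul (d a) [(1%Q, m')]) (pmul [(1%Q,[a])] (dmono d m')) end.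
Definition dpoly (d : atom -> poly) (P:poly) : poly :=
  fold_right (fun t acc => padd (pscale (fst t) (dmono d (snd t))) acc) nil P.
Definition d_pder (k:nat) (a:atom) : poly :=
  match a with
  | AV k' => if Nat.eqb k' k then [(1%Q,nil)] else nil
  | AF i d => if Nat.eqb k 0 then [(1%Q,[AF i (S d)])] else nil end.
Definition d_Dx (a:atom) : poly :=
  match a with
  | AV k => [(1%Q,[AV (S k)])]
  | AF i d => [(1%Q,[AV 1; AF i (S d)])] end.
Definition sDxn (k:nat) (P:poly) : poly := Nat.iter k (dpoly d_Dx) P.
Fixpoint qsign (n:nat) : Q := match n with O => 1%Q | S n' => Qopp (qsign n') end.
Fixpoint seuler (m:nat) (P:poly) : poly :=
  match m with
  | O => dpoly (d_pder 0) P
  | S m' => padd (seuler m' P) (pscale (qsign m) (sDxn m (dpoly (d_pder m) P)))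
  end.
Definition A (a:atom) : poly := [(1%Q,[a])].
Definition K (q:Q) : poly := [(q,nil)].
Fixpoint ppow (P:poly) (n:nat) : poly := match n with O => K 1 | S n' => pmul P (ppow P n') end.
(* fs: 0=c 1=p 2=s *)
Definition HP (i n : nat) : poly :=
  match n with
  | 0%nat => A (AF i 0)
  | 2%nat => pmul (K (-1#24)%Q) (pmul (A (AF 0 0)) (pmul (A (AF i 3)) (ppow (A (AV 1)) 2)))
  | 4%nat => padd (pmul (padd (pmul (A (AF 1 0)) (A (AF i 3)))
                           (pmul (K (1#480)%Q) (pmul (ppow (A (AF 0 0)) 2) (A (AF i 4)))))
                     (ppow (A (AV 2)) 2))
              (pmul (K (-1)%Q) (pmul (
                 padd (pmul (K (1#1152)%Q) (pmul (A (AF 0 0)) (pmul (A (AF 0 2)) (A (AF i 4)))))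
                 (padd (pmul (K (1#1152)%Q) (pmul (A (AF 0 0)) (pmul (A (AF 0 1)) (A (AF i 5)))))
                 (padd (pmul (K (1#3456)%Q) (pmul (ppow (A (AF 0 0)) 2) (A (AF i 6))))
                 (padd (pmul (K (1#6)%Q) (pmul (A (AF 1 1)) (A (AF i 4))))
                 (padd (pmul (K (1#6)%Q) (pmul (A (AF 1 0)) (A (AF i 5))))
                       (pmul (K (-1)%Q) (pmul (A (AF 2 0)) (A (AF i 3)))))))))
                (ppow (A (AV 1)) 4)))
  | _ => nil
  end.
Fixpoint sum_poly (F : nat -> poly) (n:nat) : poly :=
  match n with O => F O | S n' => padd (sum_poly F n') (F n) end.
Definition BP (n:nat) : poly :=
  sum_poly (fun i => pmul (seuler 2 (HP 3 i)) (dpoly d_Dx (seuler 2 (HP 4 (n-i))))) n.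
Local Open Scope R_scope.

Section Ev.
Variable fs : nat -> R -> R.

Definition eva (j:jet) (a:atom) : R :=
  match a with AV k => j k | AF i d => Derive_n (fs i) d (j 0%nat) end.
Fixpoint evm (m:mono) (j:jet) : R :=
  match m with nil => 1 | a::m' => eva j a * evm m' j end.
Fixpoint evp (P:poly) (j:jet) : R :=
  match P with nil => 0 | t::P' => Q2R (fst t) * evm (snd t) j + evp P' j end.

Lemma evm_ins a m j : evm (ins_atom a m) j = eva j a * evm m j.
Proof.
  induction m as [|b m IH]; simpl; [ring|].
  destruct (atom_leb a b); simpl; [ring| rewrite IH; ring].
Qed.

Lemma evm_mmul m1 m2 j : evm (mmul m1 m2) j = evm m1 j * evm m2 j.
Proof.
  induction m1 as [|a m1 IH]; simpl; [ring|].
  unfold mmul in *; simpl. rewrite evm_ins, IH; ring.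
Qed.

Lemma atom_eqb_eq a b : atom_eqb a b = true -> a = b.
Proof.
  destruct a, b; simpl; intro H; try discriminate.
  - apply Nat.eqb_eq in H; subst; auto.
  - apply andb_prop in H; destruct H as [H1 H2].
    apply Nat.eqb_eq in H1; apply Nat.eqb_eq in H2; subst; auto.
Qed.

Lemma mono_eqb_eq m1 m2 : mono_eqb m1 m2 = true -> m1 = m2.
Proof.
  revert m2; induction m1 as [|a m1 IH]; intros [|b m2]; simpl; intro H;
    try discriminate; auto.
  apply andb_prop in H; destruct H as [H1 H2].
  rewrite (atom_eqb_eq _ _ H1), (IH _ H2); auto.
Qed.

Lemma Q2R_red q : Q2R (Qred q) = Q2R q.
Proof. apply Qeq_eqR, Qred_correct. Qed.

Lemma Q2R_zero c : Qeq_bool c 0%Q = true -> Q2R c = 0.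
Proof.
  intro H; apply Qeq_bool_eq, Qeq_eqR in H; rewrite H; unfold Q2R; simpl; ring.
Qed.

Lemma Q2R_1 : Q2R 1%Q = 1.
Proof. unfold Q2R; simpl; field. Qed.

Lemma evp_ins c m P j : evp (ins_term c m P) j = Q2R c * evm m j + evp P j.
Proof.
  induction P as [|[c' m'] P IH]; cbn [ins_term evp fst snd].
  - destruct (Qeq_bool c 0%Q) eqn:E; cbn [evp fst snd].
    + rewrite (Q2R_zero _ E); ring.
    + ring.
  - destruct (mono_eqb m m') eqn:E.
    + apply mono_eqb_eq in E; subst m'.
      destruct (Qeq_bool (Qred (c + c')) 0%Q) eqn:E2.
      * apply Q2R_zero in E2; rewrite Q2R_red, Q2R_plus in E2.
        rewrite <- Rplus_assoc, <- Rmult_plus_distr_r, E2; ring.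
      * cbn [evp fst snd]; rewrite Q2R_red, Q2R_plus; ring.
    + cbn [evp fst snd]; rewrite IH; ring.
Qed.

Lemma padd_cons t P Q0 : padd (t::P) Q0 = ins_term (fst t) (snd t) (padd P Q0).
Proof. reflexivity. Qed.

Lemma evp_padd P Q0 j : evp (padd P Q0) j = evp P j + evp Q0 j.
Proof.
  induction P as [|t P IH]; [simpl; ring|].
  rewrite padd_cons, evp_ins, IH; simpl; ring.
Qed.

Lemma evp_pscale q P j : evp (pscale q P) j = Q2R q * evp P j.
Proof.
  induction P as [|t P IH]; unfold pscale in *; cbn [map evp fst snd]; [ring|].
  rewrite IH, Q2R_red, Q2R_mult; ring.
Qed.

Lemma evp_map c m Q0 j :
  evp (map (fun t' => (Qred (c * fst t')%Q, mmul m (snd t'))) Q0) j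
  = Q2R c * evm m j * evp Q0 j.
Proof.
  induction Q0 as [|t Q0 IH]; cbn [map evp fst snd]; [ring|].
  rewrite IH, Q2R_red, Q2R_mult, evm_mmul; ring.
Qed.

Lemma evp_pmul P Q0 j : evp (pmul P Q0) j = evp P j * evp Q0 j.
Proof.
  induction P as [|t P IH]; [simpl; ring|].
  change (pmul (t::P) Q0) with (padd (map (fun t' => (Qred (fst t * fst t')%Q, mmul (snd t) (snd t'))) Q0) (pmul P Q0)).
  rewrite evp_padd, evp_map, IH; cbn [evp]; ring.
Qed.

Lemma evp_A a j : evp (A a) j = eva j a.
Proof. simpl; rewrite Q2R_1; ring. Qed.
Lemma evp_K q j : evp (K q) j = Q2R q.
Proof. simpl; ring. Qed.
Lemma evp_ppow P n j : evp (ppow P n) j = evp P j ^ n.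
Proof. induction n; simpl; [rewrite Q2R_1; ring| rewrite evp_pmul, IHn; ring]. Qed.

Lemma evp_sum F n j : evp (sum_poly F n) j = sum_f_R0 (fun i => evp (F i) j) n.
Proof. induction n; simpl; [auto| rewrite evp_padd, IHn; auto]. Qed.

Lemma isd_eq (f : R -> R) (x l l' : R) : is_derive f x l -> l = l' -> is_derive f x l'.
Proof. intros H ->; exact H. Qed.
Lemma isd_plus (f g : R -> R) (x df dg : R) : is_derive f x df -> is_derive g x dg ->
  is_derive (fun t => f t + g t) x (df + dg).
Proof. intros; apply (is_derive_plus f g); auto. Qed.
Lemma isd_mult (f g : R -> R) (x df dg : R) : is_derive f x df -> is_derive g x dg ->
  is_derive (fun t => f t * g t) x (df * g x + f x * dg).
Proof. intros; apply (is_derive_mult f g); auto. intros; apply Rmult_comm. Qed.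
Lemma isd_const (a x : R) : is_derive (fun _ : R => a) x 0.
Proof. apply (is_derive_const a x). Qed.
Lemma isd_id (x : R) : is_derive (fun t : R => t) x 1.
Proof. apply (is_derive_id x). Qed.

Section Deriv.
Variable (g : R -> jet) (t0 : R) (d : atom -> poly).
Hypothesis Hd : forall a, is_derive (fun t => eva (g t) a) t0 (evp (d a) (g t0)).

Lemma isd_evm m : is_derive (fun t => evm m (g t)) t0 (evp (dmono d m) (g t0)).
Proof.
  induction m as [|a m IH]; cbn [evm dmono].
  - apply isd_const.
  - eapply isd_eq. apply isd_mult; [apply Hd| apply IH].
    rewrite evp_padd, !evp_pmul; cbn [evp evm fst snd]. rewrite Q2R_1. ring_simplify. ring.
Qed.

Lemma isd_evp P : is_derive (fun t => evp P (g t)) t0 (evp (dpoly d P) (g t0)).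
Proof.
  induction P as [|[c m] P IH]; simpl.
  - apply isd_const.
  - eapply isd_eq. apply isd_plus; [|apply IH].
    apply is_derive_scal, isd_evm.
    unfold dpoly; simpl; fold (dpoly d P). rewrite evp_padd, evp_pscale; ring.
Qed.
End Deriv.

Hypothesis Hsm : forall i, smooth (fs i).

Lemma smooth_deriv i dd x : is_derive (Derive_n (fs i) dd) x (Derive_n (fs i) (S dd) x).
Proof.
  pose proof (Hsm i (S dd) x) as E; simpl in E; apply Derive_correct in E; exact E.
Qed.

Lemma pder_evp k P : pder k (evp P) = evp (dpoly (d_pder k) P).
Proof.
  apply functional_extensionality; intro j. unfold pder.
  apply is_derive_unique.
  assert (Hg : upd j k (j k) = j).
  { apply functional_extensionality; intro i; unfold upd.
    destruct (Nat.eqb_spec i k); subst; auto. }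
  assert (Hat : forall a, is_derive (fun t => eva (upd j k t) a) (j k) (evp (d_pder k a) (upd j k (j k)))).
  { intro a; rewrite Hg. destruct a as [k'|i dd]; cbn [eva d_pder]; unfold upd.
    - destruct (Nat.eqb k' k); cbn [evp evm fst snd].
      + eapply isd_eq; [apply isd_id| rewrite Q2R_1; ring].
      + apply isd_const.
    - destruct k as [|k]; cbn [Nat.eqb evp evm eva fst snd].
      + eapply isd_eq; [apply smooth_deriv| rewrite Q2R_1; ring].
      + apply isd_const. }
  pose proof (isd_evp (fun t => upd j k t) (j k) (d_pder k) Hat P) as X.
  cbv beta in X; rewrite Hg in X; apply X.
Qed.

Lemma Dx_evp P : Defs.Dx (evp P) = evp (dpoly d_Dx P).
Proof.
  apply functional_extensionality; intro j. unfold Defs.Dx.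
  apply is_derive_unique.
  assert (Hg : (fun i => j i + 0 * j (S i)) = j).
  { apply functional_extensionality; intro i; ring. }
  assert (Hat : forall a, is_derive (fun t => eva (fun i => j i + t * j (S i)) a) 0 (evp (d_Dx a) (fun i => j i + 0 * j (S i)))).
  { intro a; rewrite Hg. destruct a as [k|i dd]; cbn [eva d_Dx evp evm fst snd].
    - eapply isd_eq. apply isd_plus; [apply isd_const| apply isd_mult; [apply isd_id|apply isd_const]].
      rewrite Q2R_1; cbn [eva]; ring.
    - eapply isd_eq.
      apply (is_derive_comp (Derive_n (fs i) dd) (fun t => j 0%nat + t * j 1%nat)).
      + rewrite Rmult_0_l, Rplus_0_r. apply smooth_deriv.
      + apply isd_plus; [apply isd_const| apply isd_mult; [apply isd_id|apply isd_const]].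
      + rewrite Q2R_1. cbn [eva]. unfold scal; simpl; unfold mult; simpl. ring. }
  pose proof (isd_evp (fun t i => j i + t * j (S i)) 0 d_Dx Hat P) as X.
  cbv beta in X; rewrite Hg in X; apply X.
Qed.

Lemma Dxn_evp k P : Dxn k (evp P) = evp (sDxn k P).
Proof. induction k; simpl; [auto| rewrite IHk, Dx_evp; auto]. Qed.

Lemma Q2R_qsign n : Q2R (qsign n) = (-1) ^ n.
Proof.
  induction n; simpl; [apply Q2R_1| rewrite Q2R_opp, IHn; ring].
Qed.

Lemma euler_evp m P : euler_aux m (evp P) = evp (seuler m P).
Proof.
  induction m.
  - simpl; apply pder_evp.
  - apply functional_extensionality; intro j.
    change (euler_aux m (evp P) j + (-1) ^ S m * Dxn (S m) (pder (S m) (evp P)) j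
            = evp (padd (seuler m P) (pscale (qsign (S m)) (sDxn (S m) (dpoly (d_pder (S m)) P)))) j).
    rewrite IHm, pder_evp, Dxn_evp, evp_padd, evp_pscale, Q2R_qsign; reflexivity.
Qed.
End Ev.

Lemma Q2R_mk (a : Z) (b : positive) : Q2R (Qmake a b) = IZR a / IZR (Zpos b).
Proof. reflexivity. Qed.

Lemma hdens_evp (fs : nat -> R -> R) (c p s F : R -> R) (i : nat) :
  fs 0%nat = c -> fs 1%nat = p -> fs 2%nat = s -> fs i = F ->
  hdens c p s F = fun n => evp fs (HP i n).
Proof.
  intros H0 H1 H2 Hi.
  apply functional_extensionality; intro n.
  apply functional_extensionality; intro j.
  destruct n as [|[|[|[|[|n]]]]];
    cbv beta iota delta [hdens HP]; 
    repeat rewrite ?evp_padd, ?evp_pmul, ?evp_A, ?evp_K, ?evp_ppow;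
    cbn [eva evp]; rewrite ?H0, ?H1, ?H2, ?Hi; unfold dn; rewrite ?Q2R_mk;
    try reflexivity.
  all: cbn [Derive_n]; field.
Qed.

Definition env (c p s f g : R -> R) : nat -> R -> R :=
  fun i => match i with 0%nat => c | 1%nat => p | 2%nat => s | 3%nat => f | _ => g end.

Lemma BP0 : seuler 5 (BP 0) = nil. Proof. vm_compute; reflexivity. Qed.
Lemma BP1 : seuler 5 (BP 1) = nil. Proof. vm_compute; reflexivity. Qed.
Lemma BP2 : seuler 5 (BP 2) = nil. Proof. vm_compute; reflexivity. Qed.
Lemma BP3 : seuler 5 (BP 3) = nil. Proof. vm_compute; reflexivity. Qed.
Lemma BP4 : seuler 5 (BP 4) = nil. Proof. vm_compute; reflexivity. Qed.
Lemma BP5 : seuler 5 (BP 5) = nil. Proof. vm_compute; reflexivity. Qed.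

Theorem lemma2p3 (c p s f g : R -> R) :
  smooth c -> smooth p -> smooth s -> smooth f -> smooth g ->
  forall (n : nat), (n < 6)%nat ->
  forall j : jet, euler 5 (bracket_dens c p s f g n) j = 0.
Proof.
  intros Hc Hp Hs Hf Hg n Hn j.
  set (fs := env c p s f g).
  assert (Hsm : forall i, smooth (fs i)).
  { intros [|[|[|[|i]]]]; simpl; auto. }
  assert (E : bracket_dens c p s f g n = evp fs (BP n)).
  { apply functional_extensionality; intro j'.
    unfold bracket_dens, smul, svar, sDx, euler.
    rewrite (hdens_evp fs c p s f 3) by reflexivity.
    rewrite (hdens_evp fs c p s g 4) by reflexivity.
    unfold BP; rewrite evp_sum. apply sum_eq; intros i _.
    rewrite evp_pmul, !(euler_evp fs Hsm), (Dx_evp fs Hsm). reflexivity. }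
  rewrite E; unfold euler; rewrite (euler_evp fs Hsm).
  do 6 (destruct n as [|n]; [first [rewrite BP0|rewrite BP1|rewrite BP2|rewrite BP3|rewrite BP4|rewrite BP5]; reflexivity|]).
  exfalso; apply (Nat.lt_irrefl 6); eapply Nat.le_lt_trans; [|exact Hn]; repeat apply le_n_S; apply Nat.le_0_l.
Qed.
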